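(* Let $\Gamma=(G,\sigma)$, $G=(V,E)$, be a signed graph and $f:V\to\mathbb R$ a function not identically zero. Then for any three pairwise distinct weak nodal domains $D_1,D_2,D_3$ of $f$, $D_1\cap D_2\cap D_3=\emptyset$ (as vertex sets).
   Context: A signed graph is a finite simple undirected graph $G=(V,E)$ with $\sigma:E\to\{+1,-1\}$. A walk is $y_1,\dots,y_m$ ($m\ge2$) with consecutive vertices adjacent. For $f:V\to\mathbb R$, a W-walk of $f$ is a walk such that for any two consecutive nonzeros $y_i,y_j$ along it ($i<j$, $f(y_i)\ne0\ne f(y_j)$, $f(y_l)=0$ for $i<l<j$) one has $f(y_i)\sigma_{y_iy_{i+1}}\cdots\sigma_{y_{j-1}y_j}f(y_j)>0$. On $\Omega=\{x:f(x)\ne0\}$ the relation ''$x=y$ or a W-walk connects $x$ and $y$'' is an equivalence relation with classes $W_1,\dots,W_q$; the weak nodal domains of $f$ are the induced subgraphs on $W_i^0=W_i\cup\{x\in V:\text{there is a W-walk from } x \text{ to some vertex of } W_i\}$. *)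

(* Defs.v *)
From HB Require Import structures.
From mathcomp Require Import all_boot all_order all_algebra.
From mathcomp Require Export reals.
Set Implicit Arguments. Unset Strict Implicit. Unset Printing Implicit Defensive.
Import Order.TTheory GRing.Theory Num.Theory.
Local Open Scope ring_scope.

Section SignedGraph.
Variables (T : finType) (R : realType).

Definition signed_graph (e : rel T) (sigma : T -> T -> R) : Prop :=
  symmetric e /\ irreflexive e /\
  (forall x y, e x y -> sigma x y = sigma y x /\ (sigma x y = 1 \/ sigma x y = -1)).

Variables (e : rel T) (sigma : T -> T -> R) (f : T -> R).

Definition is_walk (s : seq T) : Prop :=
  (2 <= size s)%N /\
  forall (x0 : T) i, (i.+1 < size s)%N -> e (nth x0 s i) (nth x0 s i.+1).

Definition is_W_walk (s : seq T) : Prop :=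
  is_walk s /\
  forall (x0 : T) i j, (i < j)%N -> (j < size s)%N ->
    f (nth x0 s i) != 0 -> f (nth x0 s j) != 0 ->
    (forall l, (i < l)%N -> (l < j)%N -> f (nth x0 s l) = 0) ->
    0 < f (nth x0 s i) * (\prod_(i <= l < j) sigma (nth x0 s l) (nth x0 s l.+1))
          * f (nth x0 s j).

Definition W_walk_from_to (x y : T) : Prop :=
  exists s, is_W_walk s /\ head x s = x /\ last x s = y /\ s <> [::].

Definition W_rel (x y : T) : Prop :=
  x = y \/ W_walk_from_to x y \/ W_walk_from_to y x.

Definition W_class (x : T) (y : T) : Prop := f y != 0 /\ W_rel x y.

Definition W_class0 (x : T) (z : T) : Prop :=
  W_class x z \/ exists w, W_class x w /\ W_walk_from_to z w.

Definition weak_nodal_domain (D : {set T}) : Prop :=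
  exists x, f x != 0 /\ forall z, z \in D <-> W_class0 x z.

End SignedGraph.

(* Main.v *)
Require Import Defs.
From HB Require Import structures.
From mathcomp Require Import all_boot all_order all_algebra.
From mathcomp Require Import reals ring lra zify.
Import Order.TTheory GRing.Theory Num.Theory.
Set Implicit Arguments. Unset Strict Implicit. Unset Printing Implicit Defensive.
Local Open Scope ring_scope.

Section Aux.
Variables (T : finType) (R : realType) (e : rel T) (sigma : T -> T -> R) (f : T -> R).
Hypothesis Hsg : signed_graph e sigma.

Lemma sqr_pos (x : R) : x != 0 -> 0 < x * x.
Proof. move=> h; rewrite -expr2; nra. Qed.

Definition Pp (x0 : T) (s : seq T) i j :=
  \prod_(i <= l < j) sigma (nth x0 s l) (nth x0 s l.+1).

Definition condc x0 (c : R) (s : seq T) :=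
  forall i, (i < size s)%N -> f (nth x0 s i) != 0 -> 0 < c * f (nth x0 s i) * Pp x0 s 0 i.

Lemma Pp_split x0 s i j k : (i <= j)%N -> (j <= k)%N -> Pp x0 s i k = Pp x0 s i j * Pp x0 s j k.
Proof. by move=> h1 h2; rewrite /Pp (big_cat_nat h1 h2). Qed.

Lemma Pp_sq x0 s i j : is_walk e s -> (j < size s)%N -> Pp x0 s i j * Pp x0 s i j = 1.
Proof.
move=> [_ hw] hj; rewrite /Pp -big_split /=; rewrite big_nat big1 // => l /andP [_ hl].
have he : e (nth x0 s l) (nth x0 s l.+1) by apply: hw; lia.
case: Hsg => _ [_ h]; case: (h _ _ he) => _ [->|->]; lra.
Qed.

Lemma Pp_x0 x0 x1 s i j : (j < size s)%N -> Pp x0 s i j = Pp x1 s i j.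
Proof.
move=> hj; rewrite /Pp big_nat [RHS]big_nat; apply: eq_bigr => l /andP [_ hl].
by rewrite (set_nth_default x1) ?(set_nth_default x1 x0 (_ : l.+1 < size s)%N) //; lia.
Qed.

Lemma condc_x0 x0 x1 c s : condc x0 c s -> condc x1 c s.
Proof.
move=> h i hi; rewrite (set_nth_default x0) // (Pp_x0 _ x0) //; exact: h.
Qed.


Lemma W_strong s x0 : is_W_walk e sigma f s -> forall i j, (i < j)%N -> (j < size s)%N ->
  f (nth x0 s i) != 0 -> f (nth x0 s j) != 0 ->
  0 < f (nth x0 s i) * Pp x0 s i j * f (nth x0 s j).
Proof.
move=> [hw hW].
suff H : forall d i j, (j - i <= d)%N -> (i < j)%N -> (j < size s)%N ->
  f (nth x0 s i) != 0 -> f (nth x0 s j) != 0 ->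
  0 < f (nth x0 s i) * Pp x0 s i j * f (nth x0 s j).
  by move=> i j; apply: (H (j - i)%N).
elim=> [|d IH] i j hd hij hj fi fj; first lia.
case: (boolP (has (fun k => f (nth x0 s k) != 0) (iota i.+1 (j - i.+1)))).
  move/hasP => [k]; rewrite mem_iota => /andP [hk1 hk2] fk.
  have h1 := IH i k ltac:(lia) ltac:(lia) ltac:(lia) fi fk.
  have h2 := IH k j ltac:(lia) ltac:(lia) hj fk fj.
  rewrite (Pp_split x0 s (_ : i <= k)%N (_ : k <= j)%N); [|lia|lia].
  rewrite -(pmulr_lgt0 _ (sqr_pos fk)).
  have -> : f (nth x0 s i) * (Pp x0 s i k * Pp x0 s k j) * f (nth x0 s j) * (f (nth x0 s k) * f (nth x0 s k))
    = (f (nth x0 s i) * Pp x0 s i k * f (nth x0 s k)) * (f (nth x0 s k) * (Pp x0 s k j) * f (nth x0 s j)) by ring.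
  exact: mulr_gt0 h1 h2.
move/hasPn => hn.
apply: hW => // l hl1 hl2; apply/eqP; apply: negbNE; apply: hn; rewrite mem_iota; lia.
Qed.

Lemma W_to_c s x0 : is_W_walk e sigma f s -> exists c, condc x0 c s.
Proof.
move=> hW; have hw := hW.1.
case: (boolP (has (fun k => f (nth x0 s k) != 0) (iota 0 (size s)))); last first.
  move/hasPn => hn; exists 1 => i hi fi; exfalso.
  by move: (hn i); rewrite mem_iota fi => /(_ ltac:(lia)).
move/hasP => [k]; rewrite mem_iota => /andP [_ hk] fk.
exists (f (nth x0 s k) * Pp x0 s 0 k) => i hi fi.
case: (ltngtP i k) => hik.
- have h := W_strong hW hik hk fi fk.
  rewrite (Pp_split x0 s (_ : 0 <= i)%N (ltnW hik)) //.
  have -> : f (nth x0 s k) * (Pp x0 s 0 i * Pp x0 s i k) * f (nth x0 s i) * Pp x0 s 0 i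
    = (f (nth x0 s i) * Pp x0 s i k * f (nth x0 s k)) * (Pp x0 s 0 i * Pp x0 s 0 i) by ring.
  by rewrite Pp_sq // mulr1.
- have h := W_strong hW hik hi fk fi.
  rewrite (Pp_split x0 s (_ : 0 <= k)%N (ltnW hik)) //.
  have -> : f (nth x0 s k) * Pp x0 s 0 k * f (nth x0 s i) * (Pp x0 s 0 k * Pp x0 s k i)
    = (f (nth x0 s k) * Pp x0 s k i * f (nth x0 s i)) * (Pp x0 s 0 k * Pp x0 s 0 k) by ring.
  by rewrite Pp_sq // mulr1.
- subst i.
  have -> : f (nth x0 s k) * Pp x0 s 0 k * f (nth x0 s k) * Pp x0 s 0 k
    = (f (nth x0 s k) * f (nth x0 s k)) * (Pp x0 s 0 k * Pp x0 s 0 k) by ring.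
  by rewrite Pp_sq // mulr1 sqr_pos.
Qed.

Lemma c_to_W s x0 c : is_walk e s -> condc x0 c s -> is_W_walk e sigma f s.
Proof.
move=> hw hc; split => // x1 i j hij hj fi fj _.
have hc1 := condc_x0 (x1:=x1) hc.
have h1 := hc1 i (ltn_trans hij hj) fi.
have h2 := hc1 j hj fj.
have cn : c != 0 by apply/eqP => c0; move: h1; rewrite c0 !mul0r ltxx.
rewrite -(pmulr_lgt0 _ (sqr_pos cn)).
have E : (c * c) = (c * c) * (Pp x1 s 0 i * Pp x1 s 0 i) by rewrite Pp_sq ?mulr1 //; apply: ltn_trans hij hj.
rewrite E.
have -> : f (nth x1 s i) * Pp x1 s i j * f (nth x1 s j) * (c * c * (Pp x1 s 0 i * Pp x1 s 0 i))
  = (c * f (nth x1 s i) * Pp x1 s 0 i) * (c * f (nth x1 s j) * (Pp x1 s 0 i * Pp x1 s i j)) by ring.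
rewrite -Pp_split //; last exact: ltnW.
exact: mulr_gt0.
Qed.

Lemma sigma_sym x y : e x y -> sigma y x = sigma x y.
Proof. by case: Hsg => _ [_ h] /h [-> _]. Qed.

Lemma nthA (x0 y : T) (p t : seq T) l : (l <= size p)%N -> nth x0 (p ++ y :: t) l = nth x0 (rcons p y) l.
Proof.
move=> hl; rewrite nth_cat nth_rcons; case: ltnP => // h.
have -> : l = size p by apply/eqP; rewrite eqn_leq hl h.
by rewrite subnn eqxx.
Qed.

Lemma nthB (x0 : T) (p s2 : seq T) l : nth x0 (p ++ s2) (size p + l) = nth x0 s2 l.
Proof. by rewrite nth_cat ltnNge leq_addr /= addKn. Qed.

Lemma Pp_shift x0 p s2 a b : Pp x0 (p ++ s2) (size p + a) (size p + b) = Pp x0 s2 a b.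
Proof.
elim: b => [|b IH]; first by rewrite /Pp !big_geq // ?addn0 ?leq_addr.
case: (leqP b.+1 a) => h; first by rewrite /Pp !big_geq // leq_add2l.
rewrite /Pp addnS !big_nat_recr //=; last lia.
by rewrite -/(Pp _ _ _ _) IH -addnS !nthB.
Qed.

Lemma cat_lemma x0 p y t c1 c2 :
  is_walk e (rcons p y) -> is_walk e (y :: t) ->
  condc x0 c1 (rcons p y) -> condc x0 c2 (y :: t) ->
  0 < c1 * Pp x0 (rcons p y) 0 (size p) * c2 ->
  is_walk e (p ++ y :: t) /\ condc x0 c1 (p ++ y :: t).
Proof.
move=> [hs1 hw1] [hs2 hw2] hc1 hc2 hcomp.
have hPA : forall i, (i <= size p)%N -> Pp x0 (p ++ y :: t) 0 i = Pp x0 (rcons p y) 0 i.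
  move=> i hi; rewrite /Pp !big_nat; apply: eq_bigr => l /andP [_ hl].
  rewrite !nthA //; lia.
split.
  split; first by move: hs2; rewrite size_cat /=; lia.
  move=> x1 i hi.
  rewrite (set_nth_default x0 x1 (_ : i < _)%N); last lia.
  rewrite (set_nth_default x0 x1 hi).
  rewrite size_cat in hi.
  case: (leqP i.+1 (size p)) => h.
    rewrite !nthA //; [|lia]; apply: hw1; rewrite size_rcons; lia.
  have -> : i = (size p + (i - size p))%N by lia.
  rewrite -addnS !nthB; apply: hw2; move: hi => /=; lia.
move=> i hi fi; rewrite size_cat in hi.
case: (leqP i (size p)) => h.
  rewrite hPA // nthA // in fi *; apply: hc1 => //; rewrite size_rcons; lia.
move: fi; have -> : i = (size p + (i - size p))%N by lia.
set l := (i - size p)%N => fi.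
rewrite (Pp_split _ _ (_ : 0 <= size p)%N (leq_addr _ _)) // hPA //.
have -> : Pp x0 (p ++ y :: t) (size p) (size p + l) = Pp x0 (y :: t) 0 l by rewrite -(Pp_shift x0 p (y :: t) 0 l) addn0.
rewrite nthB.
rewrite nthB in fi.
have h2 := hc2 l ltac:(move: hi => /=; lia) fi.
have cn : c2 != 0 by apply/eqP => c0; move: hcomp; rewrite c0 mulr0 ltxx.
rewrite -(pmulr_lgt0 _ (sqr_pos cn)).
have -> : c1 * f (nth x0 (y :: t) l) * (Pp x0 (rcons p y) 0 (size p) * Pp x0 (y :: t) 0 l) * (c2 * c2)
  = (c1 * Pp x0 (rcons p y) 0 (size p) * c2) * (c2 * f (nth x0 (y :: t) l) * Pp x0 (y :: t) 0 l) by ring.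
exact: mulr_gt0.
Qed.

Lemma rev_walk s : is_walk e s -> is_walk e (rev s).
Proof.
move=> [hs hw]; split; rewrite size_rev //.
move=> x0 i hi; rewrite !nth_rev; try lia.
have -> : (size s - i.+1 = (size s - i.+2).+1)%N by lia.
case: Hsg => hsym _; rewrite hsym; apply: hw; lia.
Qed.

Lemma Pp_rev x0 s t : is_walk e s -> (t < size s)%N ->
  Pp x0 (rev s) 0 t = Pp x0 s (size s - t.+1) (size s).-1.
Proof.
move=> hw; elim: t => [|t IH] ht.
  by rewrite /Pp !big_geq //; lia.
rewrite /Pp big_nat_recr //= -/(Pp _ _ _ _) IH; last lia.
rewrite /Pp (@big_ltn _ _ _ (size s - t.+2)%N); last lia.
have -> : ((size s - t.+2).+1 = size s - t.+1)%N by lia.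
rewrite !nth_rev; try lia.
rewrite -/(Pp _ _ _ _) mulrC; congr (_ * _).
have -> : (size s - t.+1 = (size s - t.+2).+1)%N by lia.
apply: sigma_sym; apply: hw.2; lia.
Qed.

Lemma rev_cond x0 c s : is_walk e s -> condc x0 c s ->
  condc x0 (c * Pp x0 s 0 (size s).-1) (rev s).
Proof.
move=> hw hc i; rewrite size_rev => hi; rewrite Pp_rev // nth_rev // => fi.
have hk : (size s - i.+1 < size s)%N by lia.
have h := hc _ hk fi.
rewrite (Pp_split _ _ (_ : 0 <= size s - i.+1)%N (_ : size s - i.+1 <= (size s).-1)%N) //; last lia.
set a := Pp _ _ 0 _; set b := Pp _ _ _ _.
have -> : c * (a * b) * f (nth x0 s (size s - i.+1)) * b = (c * f (nth x0 s (size s - i.+1)) * a) * (b * b) by ring.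
rewrite /b Pp_sq ?mulr1 //; lia.
Qed.

Lemma WftE x y : W_walk_from_to e sigma f x y <->
  exists s, is_W_walk e sigma f (x :: s) /\ last x s = y.
Proof.
split.
  move=> [[|a s] [hW [/= hh [hl _]]]] //; subst a; by exists s.
move=> [s [hW hl]]; by exists (x :: s).
Qed.

Lemma W_nonempty x s : is_W_walk e sigma f (x :: s) -> exists q y, s = rcons q y.
Proof.
move=> [[hs _] _]; move: hs; case: (lastP s) => [//|q y _]; by exists q, y.
Qed.

Lemma W_rev x y : W_walk_from_to e sigma f x y -> W_walk_from_to e sigma f y x.
Proof.
move/WftE => [s [hW hl]]; apply/WftE.
have [q [z E]] := W_nonempty hW; subst s; move: hl hW; rewrite last_rcons => <- hW.
exists (rcons (rev q) x); split; last by rewrite last_rcons.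
have [c hc] := W_to_c x hW.
have hw := hW.1.
have E : rev (x :: rcons q z) = z :: rcons (rev q) x by rewrite rev_cons rev_rcons.
rewrite -E; exact: (c_to_W (rev_walk hw) (rev_cond hw hc)).
Qed.

Lemma Pp00 x0 s : Pp x0 s 0 0 = 1.
Proof. by rewrite /Pp big_geq. Qed.

Lemma W_cat x y z : f y != 0 -> W_walk_from_to e sigma f x y -> W_walk_from_to e sigma f y z ->
  W_walk_from_to e sigma f x z.
Proof.
move=> fy /WftE [s1 [hW1 hl1]] /WftE [t [hW2 hl2]]; apply/WftE.
have [q [w E]] := W_nonempty hW1; subst s1; move: hl1 hW1; rewrite last_rcons => -> hW1.
have [c1 hc1] := W_to_c x hW1.
have [c2 hc2] := W_to_c x hW2.
rewrite -rcons_cons in hW1 hc1.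
have hcomp : 0 < c1 * Pp x (rcons (x :: q) y) 0 (size (x :: q)) * c2.
  have h1 := hc1 (size (x :: q)) ltac:(by rewrite size_rcons) ltac:(by rewrite nth_rcons ltnn eqxx).
  have h2 := hc2 0%N is_true_true fy.
  rewrite nth_rcons ltnn eqxx in h1; rewrite /= Pp00 mulr1 in h2.
  rewrite -(pmulr_lgt0 _ (sqr_pos fy)).
  have -> : c1 * Pp x (rcons (x :: q) y) 0 (size (x :: q)) * c2 * (f y * f y)
    = (c1 * f y * Pp x (rcons (x :: q) y) 0 (size (x :: q))) * (c2 * f y) by ring.
  exact: mulr_gt0.
have [hw hc] := cat_lemma hW1.1 hW2.1 hc1 hc2 hcomp.
exists (q ++ y :: t); split; last by rewrite last_cat.
exact: (c_to_W hw hc).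
Qed.

Lemma W_cross v t1 t2 c1 c2 : is_W_walk e sigma f (v :: t1) -> is_W_walk e sigma f (v :: t2) ->
  condc v c1 (v :: t1) -> condc v c2 (v :: t2) -> 0 < c1 * c2 ->
  W_walk_from_to e sigma f (last v t1) (last v t2).
Proof.
move=> hW1 hW2 hc1 hc2 hpos; apply/WftE.
have [q [w E]] := W_nonempty hW1; subst t1; rewrite last_rcons.
have hw1 := rev_walk hW1.1.
have hrc := rev_cond hW1.1 hc1.
rewrite rev_cons in hw1 hrc.
have hcomp : 0 < c1 * Pp v (v :: rcons q w) 0 (size (v :: rcons q w)).-1 *
    Pp v (rcons (rev (rcons q w)) v) 0 (size (rev (rcons q w))) * c2.
  rewrite -rev_cons Pp_rev ?size_rev //=; last exact: hW1.1.
  rewrite subnn.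
  have -> : c1 * Pp v (v :: rcons q w) 0 (size (rcons q w)) * Pp v (v :: rcons q w) 0 (size (rcons q w)) * c2
    = (c1 * c2) * (Pp v (v :: rcons q w) 0 (size (rcons q w)) * Pp v (v :: rcons q w) 0 (size (rcons q w))) by ring.
  by rewrite Pp_sq ?mulr1 //; exact: hW1.1.
have [hw hc] := cat_lemma hw1 hW2.1 hrc hc2 hcomp.
move: hw hc; rewrite rev_rcons /= => hw hc.
exists (rev q ++ v :: t2); split; last by rewrite last_cat.
exact: (c_to_W hw hc).
Qed.

Lemma Wrel_sym x y : W_rel e sigma f x y -> W_rel e sigma f y x.
Proof. by case=> [->|[h|h]]; [left|right; right|right; left]. Qed.

Lemma Wrel_trans x y z : f y != 0 -> W_rel e sigma f x y -> W_rel e sigma f y z ->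
  W_rel e sigma f x z.
Proof.
move=> fy [->//|hxy] [<-|hyz]; first by right.
have h1 : W_walk_from_to e sigma f x y by case: hxy => // /W_rev.
have h2 : W_walk_from_to e sigma f y z by case: hyz => // /W_rev.
right; left; exact: W_cat fy h1 h2.
Qed.

Lemma class_eq x1 x2 w : f x1 != 0 -> f x2 != 0 -> W_rel e sigma f x1 x2 ->
  W_class e sigma f x1 w -> W_class e sigma f x2 w.
Proof.
move=> f1 f2 h12 [fw h1w]; split => //.
exact: Wrel_trans f1 (Wrel_sym h12) h1w.
Qed.

Lemma class0_eq x1 x2 w : f x1 != 0 -> f x2 != 0 -> W_rel e sigma f x1 x2 ->
  W_class0 e sigma f x1 w -> W_class0 e sigma f x2 w.
Proof.
move=> f1 f2 h12 [h|[u [hu hw]]]; first by left; exact: class_eq h.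
right; exists u; split => //; exact: class_eq hu.
Qed.

Lemma dom_eq (D1 D2 : {set T}) x1 x2 : f x1 != 0 -> f x2 != 0 -> W_rel e sigma f x1 x2 ->
  (forall z, z \in D1 <-> W_class0 e sigma f x1 z) ->
  (forall z, z \in D2 <-> W_class0 e sigma f x2 z) -> D1 = D2.
Proof.
move=> f1 f2 h12 hD1 hD2; apply/setP => z; apply/idP/idP.
  by move/hD1 => h; apply/hD2; exact: class0_eq h.
by move/hD2 => h; apply/hD1; apply: class0_eq h => //; exact: Wrel_sym.
Qed.

Lemma memb_nz x v : W_class0 e sigma f x v -> f v != 0 -> W_rel e sigma f x v.
Proof.
move=> [[_ h]//|[w [[fw hxw] hvw]]] fv.
apply: Wrel_trans fw hxw _; right; right; exact: hvw.
Qed.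

Lemma memb_z x v : W_class0 e sigma f x v -> f v = 0 ->
  exists w, f w != 0 /\ W_rel e sigma f x w /\ W_walk_from_to e sigma f v w.
Proof.
move=> [[fv _]|[w [[fw hxw] hvw]]] hv; first by rewrite hv eqxx in fv.
by exists w.
Qed.

Lemma c_nz v c s : condc v c (v :: s) -> f (last v s) != 0 -> c != 0.
Proof.
move=> hc fl; apply/eqP => c0.
have := hc (size s) (ltnSn _); rewrite -[nth _ _ (size s)]/(nth v (v :: s) (size (v :: s)).-1) nth_last /=.
by rewrite c0 !mul0r ltxx => /(_ fl).
Qed.

Lemma pigeon (a b c : R) : a != 0 -> b != 0 -> c != 0 -> 0 < a * b \/ 0 < a * c \/ 0 < b * c.
Proof.
move=> ha hb hc.
have sg : forall x : R, x != 0 -> x < 0 \/ 0 < x.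
  by move=> x hx; case: (ltgtP x 0) => h; [left|right|rewrite h eqxx in hx].
case: (sg a ha) => h1; case: (sg b hb) => h2; case: (sg c hc) => h3;
  first [left; nra | right; left; nra | right; right; nra].
Qed.

End Aux.

Unset Implicit Arguments.

Theorem proposition3p8 (T : finType) (R : realType) (e : rel T)
  (sigma : T -> T -> R) (f : T -> R) :
  signed_graph e sigma ->
  (exists x, f x != 0) ->
  forall D1 D2 D3 : {set T},
    weak_nodal_domain e sigma f D1 ->
    weak_nodal_domain e sigma f D2 ->
    weak_nodal_domain e sigma f D3 ->
    D1 != D2 -> D1 != D3 -> D2 != D3 ->
    D1 :&: D2 :&: D3 = set0.
Proof.
move=> Hsg _ D1 D2 D3 [x1 [f1 hD1]] [x2 [f2 hD2]] [x3 [f3 hD3]] n12 n13 n23.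
apply/setP => v; rewrite !inE; apply/negP => /andP [/andP [/hD1 m1 /hD2 m2] /hD3 m3].
case: (eqVneq (f v) 0) => fv.
- have [w1 [fw1 [r1 /WftE [s1 [W1 l1]]]]] := memb_z m1 fv.
  have [w2 [fw2 [r2 /WftE [s2 [W2 l2]]]]] := memb_z m2 fv.
  have [w3 [fw3 [r3 /WftE [s3 [W3 l3]]]]] := memb_z m3 fv.
  have [c1 hc1] := W_to_c Hsg v W1.
  have [c2 hc2] := W_to_c Hsg v W2.
  have [c3 hc3] := W_to_c Hsg v W3.
  have nz1 : c1 != 0 by apply: (c_nz hc1); rewrite l1.
  have nz2 : c2 != 0 by apply: (c_nz hc2); rewrite l2.
  have nz3 : c3 != 0 by apply: (c_nz hc3); rewrite l3.
  have key : forall xa xb wa wb (Da Db : {set T}), f xa != 0 -> f xb != 0 ->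
      f wa != 0 -> f wb != 0 -> W_rel e sigma f xa wa -> W_rel e sigma f xb wb ->
      W_walk_from_to e sigma f wa wb ->
      (forall z, z \in Da <-> W_class0 e sigma f xa z) ->
      (forall z, z \in Db <-> W_class0 e sigma f xb z) -> Da = Db.
    move=> xa xb wa wb Da Db fa fb fwa fwb ra rb hab hDa hDb.
    apply: (dom_eq Hsg fa fb _ hDa hDb).
    apply: (Wrel_trans Hsg fwb _ (Wrel_sym rb)).
    apply: (Wrel_trans Hsg fwa ra); right; left; exact: hab.
  case: (pigeon nz1 nz2 nz3) => [h|[h|h]].
  + have hab := W_cross Hsg W1 W2 hc1 hc2 h; rewrite l1 l2 in hab.
    by move: n12; rewrite (key _ _ _ _ _ _ f1 f2 fw1 fw2 r1 r2 hab hD1 hD2) eqxx.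
  + have hab := W_cross Hsg W1 W3 hc1 hc3 h; rewrite l1 l3 in hab.
    by move: n13; rewrite (key _ _ _ _ _ _ f1 f3 fw1 fw3 r1 r3 hab hD1 hD3) eqxx.
  + have hab := W_cross Hsg W2 W3 hc2 hc3 h; rewrite l2 l3 in hab.
    by move: n23; rewrite (key _ _ _ _ _ _ f2 f3 fw2 fw3 r2 r3 hab hD2 hD3) eqxx.
- have r1 := memb_nz Hsg m1 fv.
  have r2 := memb_nz Hsg m2 fv.
  have r12 := Wrel_trans Hsg fv r1 (Wrel_sym r2).
  by move: n12; rewrite (dom_eq Hsg f1 f2 r12 hD1 hD2) eqxx.
Qed.
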